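(* Let $\mathbb{F}_q$ be any finite field, $S\subseteq\mathbb{F}_q\setminus\{0\}$ any symmetric set, $G=\Gamma(\mathbb{F}_q,S)$, and $\overline{G}=\Gamma(\mathbb{F}_q,\overline S)$ its complement, where $\overline S=(\mathbb{F}_q\setminus\{0\})\setminus S$. Define $\rho_{\mathrm{lin}}(G)=q^{1-\frac{|S|}{q-1}}$ and $\rho_{\mathrm{lin}}(\overline G)=q^{1-\frac{|\overline S|}{q-1}}$. Then exactly one of the following holds: (a) $\rho_{\mathrm{lin}}(G)=\vartheta(G)$ and $\rho_{\mathrm{lin}}(\overline{G})=\vartheta(\overline{G})$; (b) for one of the graphs $H\in\{G,\overline G\}$, $\rho_{\mathrm{lin}}(H)<\vartheta(H)$.
   Context: For a symmetric set $S\subseteq\mathbb{F}_q\setminus\{0\}$ ($S=-S$), the Cayley graph $\Gamma(\mathbb{F}_q,S)$ has vertex set $\mathbb{F}_q$, with $u\sim v$ iff $u-v\in S$. $\vartheta(\cdot)$ denotes the Lovász theta function of a graph. The quantity $\rho_{\mathrm{lin}}(\Gamma(\mathbb{F}_q,S))=q^{1-|S|/(q-1)}$ is an upper bound on the linear Shannon capacity $\Theta_{\mathrm{lin}}(\Gamma(\mathbb{F}_q,S))=\sup_k\alpha_{\mathrm{lin}}(G^k)^{1/k}$, where $\alpha_{\mathrm{lin}}(G^k)$ is the largest size of an independent set in the $k$-fold strong product $G^k$ that is a linear subspace of $\mathbb{F}_q^k$. *)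

(* Defs.v *)
From HB Require Import structures.
From mathcomp Require Import all_boot all_order all_algebra all_field.
From mathcomp Require Import boolp classical_sets reals exp.
Set Implicit Arguments. Unset Strict Implicit. Unset Printing Implicit Defensive.
Import Order.TTheory GRing.Theory Num.Theory.
Local Open Scope ring_scope.
Local Open Scope classical_set_scope.

Definition psd_sym (R : realType) (V : finType) (B : V -> V -> R) : Prop :=
  (forall u v, B u v = B v u) /\
  (forall x : V -> R, 0 <= \sum_(u : V) \sum_(v : V) x u * B u v * x v).

Definition theta_feasible (R : realType) (V : finType) (adj : rel V)
    (B : V -> V -> R) : Prop :=
  [/\ psd_sym B, \sum_(v : V) B v v = 1 &
      forall u v, u != v -> adj u v -> B u v = 0].

Definition lovasz_theta (R : realType) (V : finType) (adj : rel V) : R :=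
  sup [set t : R | exists B : V -> V -> R,
         theta_feasible adj B /\ t = \sum_(u : V) \sum_(v : V) B u v].

Definition cayley (F : finFieldType) (S : {set F}) : rel F :=
  fun u v => (u - v) \in S.

Definition compl_conn (F : finFieldType) (S : {set F}) : {set F} :=
  [set x : F | (x != 0) && (x \notin S)].

Definition rho_lin (R : realType) (F : finFieldType) (S : {set F}) : R :=
  powR (#|F|%:R) (1 - #|S|%:R / (#|F| - 1)%:R).

(* Main.v *)
Require Import Defs.
From HB Require Import structures.
From mathcomp Require Import all_boot all_order all_algebra all_field.
From mathcomp Require Import boolp classical_sets reals exp.
From mathcomp Require Import ring lra.
Import Order.TTheory GRing.Theory Num.Theory.
Local Open Scope ring_scope.
Local Open Scope classical_set_scope.
Set Implicit Arguments. Unset Strict Implicit. Unset Printing Implicit Defensive.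

Section Gen.
Variables (R : realType) (V : finType).
Implicit Types (B : V -> V -> R) (x : V -> R).

Definition qform B x := \sum_(u : V) \sum_(v : V) x u * B u v * x v.
Definition tot B := \sum_(u : V) \sum_(v : V) B u v.
Definition trc B := \sum_(v : V) B v v.
Definition ind (u : V) : V -> R := fun w => (w == u)%:R.

Lemma sum_ind_l (u : V) (f : V -> R) : \sum_(w : V) ind u w * f w = f u.
Proof.
rewrite (bigD1 u) //= /ind eqxx mul1r big1 ?addr0 // => w /negbTE ->.
by rewrite mul0r.
Qed.

Lemma sum_ind_r (u : V) (f : V -> R) : \sum_(w : V) f w * ind u w = f u.
Proof. by under eq_bigr do rewrite mulrC; exact: sum_ind_l. Qed.

Lemma sum_comb (u v : V) (a b : R) (f : V -> R) :
  \sum_(z : V) f z * (a * ind u z + b * ind v z) = a * f u + b * f v.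
Proof.
under eq_bigr do rewrite mulrDr mulrCA [f _ * (b * _)]mulrCA.
by rewrite big_split /= -!mulr_sumr !sum_ind_r.
Qed.

Lemma qform_two B (u v : V) (a b : R) :
  qform B (fun w => a * ind u w + b * ind v w) =
  a ^+ 2 * B u u + a * b * (B u v + B v u) + b ^+ 2 * B v v.
Proof.
rewrite /qform.
cbv beta.
under eq_bigr => w _ do rewrite (sum_comb u v a b (fun z => (a * ind u w + b * ind v w) * B w z)).
rewrite (eq_bigr (fun w => (a * B w u + b * B w v) * (a * ind u w + b * ind v w))); last first.
  by move=> w _; ring.
rewrite sum_comb; ring.
Qed.

Lemma psdE B : psd_sym B -> (forall u v, B u v = B v u) /\ (forall x, 0 <= qform B x).
Proof. by []. Qed.

Lemma psd_diag B u : psd_sym B -> 0 <= B u u.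
Proof.
move=> [_ P]; have := P (fun w => 1 * ind u w + 0 * ind u w).
by rewrite -/(qform B _) qform_two; lra.
Qed.

Lemma psd_off B u v : psd_sym B -> 2 * `|B u v| <= B u u + B v v.
Proof.
move=> [S P]; have := P (fun w => 1 * ind u w + 1 * ind v w).
have := P (fun w => 1 * ind u w + (-1) * ind v w).
rewrite -!/(qform B _) !qform_two (S v u).
case: (ler0P (B u v)) => _; lra.
Qed.

Lemma psd_tot B : psd_sym B -> tot B <= #|V|%:R * trc B.
Proof.
move=> PB; have SB := PB.1.
have E : tot B <= \sum_(u : V) \sum_(v : V) (B u u + B v v) / 2.
  apply: ler_sum => u _; apply: ler_sum => v _.
  have := psd_off u v PB; have := ler_norm (B u v); lra.
apply: (le_trans E); rewrite /trc.
have E1 : \sum_(u : V) \sum_(v : V) (B u u + B v v) / 2 =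
   ((\sum_(u : V) \sum_(v : V) B u u) + \sum_(u : V) \sum_(v : V) B v v) / 2.
  rewrite [RHS]mulrDl [X in _ = X + _]mulr_suml [X in _ = _ + X]mulr_suml -big_split /=; apply: eq_bigr => u _.
  by rewrite [X in _ = X + _]mulr_suml [X in _ = _ + X]mulr_suml -big_split /=; apply: eq_bigr => v _; exact: mulrDl.
rewrite E1.
have H1 : \sum_(u : V) \sum_(v : V) B u u = #|V|%:R * \sum_(v : V) B v v.
  rewrite mulr_sumr; apply: eq_bigr => u _.
  by rewrite (sumr_const _ (B u u)) mulr_natl.
have H2 : \sum_(u : V) \sum_(v : V) B v v = #|V|%:R * \sum_(v : V) B v v.
  by rewrite (sumr_const _ (\sum_(v : V) B v v)) mulr_natl.
rewrite H1 H2; lra.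
Qed.

Definition idm (c : R) : V -> V -> R := fun u v => (u == v)%:R * c.

Lemma qform_idm c x : qform (idm c) x = c * \sum_(u : V) x u ^+ 2.
Proof.
rewrite /qform /idm mulr_sumr; apply: eq_bigr => u _.
rewrite (eq_bigr (fun v => ind u v * (x u * c * x v))); last first.
  by move=> v _; rewrite /ind eq_sym; ring.
by rewrite sum_ind_l; ring.
Qed.

Lemma tot_idm c : tot (idm c) = #|V|%:R * c.
Proof.
rewrite /tot /idm (eq_bigr (fun u => c)); first by rewrite sumr_const mulr_natl.
move=> u _; rewrite (eq_bigr (fun v => ind u v * c)); first by rewrite sum_ind_l.
by move=> v _; rewrite /ind eq_sym.
Qed.

Lemma trc_idm c : trc (idm c) = #|V|%:R * c.
Proof. by rewrite /trc /idm (eq_bigr (fun u => c)) ?sumr_const ?mulr_natl // => u _; rewrite eqxx mul1r. Qed.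

Lemma psd_idm c : 0 <= c -> psd_sym (idm c).
Proof.
move=> c0; split; first by move=> u v; rewrite /idm eq_sym.
move=> x; rewrite -/(qform _ _) qform_idm; apply: mulr_ge0 => //.
by apply: sumr_ge0 => u _; exact: sqr_ge0.
Qed.

Variable adj : rel V.
Hypothesis Vn : (0 < #|V|)%N.

Definition Es (u v : V) := (u != v) && (adj u v || adj v u).

Lemma feas_Es B u v : theta_feasible adj B -> Es u v -> B u v = 0.
Proof.
move=> [[S _] _ Z] /andP[uv /orP[a|a]]; first exact: Z.
by rewrite S; apply: Z => //; rewrite eq_sym.
Qed.

Definition TS := [set t : R | exists B, theta_feasible adj B /\ t = tot B].

Lemma thetaE : lovasz_theta R adj = sup TS.
Proof. by []. Qed.

Lemma nR_gt0 : 0 < #|V|%:R :> R.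
Proof. by rewrite ltr0n. Qed.

Lemma feas_idm : theta_feasible adj (idm (#|V|%:R^-1)).
Proof.
have n0 := nR_gt0.
split; first by apply: psd_idm; rewrite invr_ge0 ltW.
  by rewrite -/(trc _) trc_idm divff // gt_eqF.
by move=> u v /negbTE uv _; rewrite /idm uv mul0r.
Qed.

Lemma tot_feas_le B : theta_feasible adj B -> tot B <= #|V|%:R.
Proof.
move=> [P T _]; apply: le_trans (psd_tot P) _.
by rewrite /trc T mulr1.
Qed.

Lemma TS_sup : has_sup TS.
Proof.
split; first by exists (tot (idm (#|V|%:R^-1))); exists (idm (#|V|%:R^-1)); split => //; exact: feas_idm.
by exists #|V|%:R => t [B [FB ->]]; exact: tot_feas_le.
Qed.

Lemma theta_ub B : theta_feasible adj B -> tot B <= lovasz_theta R adj.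
Proof. by move=> FB; rewrite thetaE; apply: sup_upper_bound TS_sup _ _; exists B. Qed.

Lemma theta_adh eps : 0 < eps ->
  exists B, theta_feasible adj B /\ lovasz_theta R adj - eps < tot B.
Proof.
move=> e0; have [t [B [FB ->]] H] := sup_adherent e0 TS_sup.
by exists B; split => //; rewrite thetaE.
Qed.

Lemma theta_ge1 : 1 <= lovasz_theta R adj.
Proof.
have := theta_ub feas_idm; rewrite tot_idm divff // gt_eqF //; exact: nR_gt0.
Qed.

Lemma theta_le_n : lovasz_theta R adj <= #|V|%:R.
Proof.
rewrite thetaE; apply: ge_sup; first by case: TS_sup.
by move=> t [B [FB ->]]; exact: tot_feas_le.
Qed.

End Gen.

Section Compl.
Variables (R : realType) (V : finType).
Implicit Types (B : V -> V -> R) (x : V -> R).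

Lemma qform_scale B k x : qform (fun u v => B u v * k) x = k * qform B x.
Proof.
rewrite /qform mulr_sumr; apply: eq_bigr => u _; rewrite mulr_sumr.
by apply: eq_bigr => v _ /=; ring.
Qed.

Lemma qform_add B1 B2 x : qform (fun u v => B1 u v + B2 u v) x = qform B1 x + qform B2 x.
Proof.
rewrite /qform -big_split; apply: eq_bigr => u _; rewrite -big_split.
by apply: eq_bigr => v _ /=; ring.
Qed.

Lemma qform_J x : qform (fun _ _ => 1) x = (\sum_(u : V) x u) ^+ 2.
Proof.
rewrite /qform expr2 mulr_suml; apply: eq_bigr => u _; rewrite mulr_sumr.
by apply: eq_bigr => v _ /=; ring.
Qed.

Lemma tot_qform B : tot B = qform B (fun _ => 1).
Proof. by rewrite /tot /qform; apply: eq_bigr => u _; apply: eq_bigr => v _ /=; ring. Qed.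

Variables (adj1 adj2 : rel V).
Hypothesis Vn : (0 < #|V|)%N.
Hypothesis disj : forall u v, u != v -> adj2 u v -> ~~ Es adj1 u v.

Lemma compl_lb (lam : R) (M : V -> V -> R) : 0 < lam ->
  psd_sym M -> (forall u, M u u = lam - 1) ->
  (forall u v, u != v -> ~~ Es adj1 u v -> M u v = -1) ->
  #|V|%:R / lam <= lovasz_theta R adj2.
Proof.
move=> l0 [SM PM] Md Mo.
have n0 := nR_gt0 R Vn.
set k := (#|V|%:R * lam)^-1.
have k0 : 0 < k by rewrite invr_gt0 mulr_gt0.
set C := fun u v => (1 + M u v) * k.
have FC : theta_feasible adj2 C.
  split.
  - split; first by move=> u v; rewrite /C SM.
    move=> x; rewrite -/(qform _ _) qform_scale qform_add qform_J.
    by apply: mulr_ge0; [exact: ltW | apply: addr_ge0; [exact: sqr_ge0 | exact: PM]].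
  - rewrite (eq_bigr (fun _ => lam * k)); last by move=> u _; rewrite /C Md; congr (_ * _); ring.
    by rewrite sumr_const -mulr_natl mulrA /k divff // mulf_neq0 // gt_eqF.
  - by move=> u v uv a; rewrite /C Mo ?disj // addrN mul0r.
have := theta_ub Vn FC; apply: le_trans.
rewrite tot_qform qform_scale qform_add qform_J -tot_qform sumr_const.
have : 0 <= tot M by rewrite tot_qform; exact: PM.
have -> : (1:R) *+ #|V| = #|V|%:R by [].
rewrite /k invfM mulrC -mulrA => tM.
have -> : #|V|%:R^-1 * (lam^-1 * (#|V|%:R ^+ 2 + tot M)) =
   lam^-1 * #|V|%:R + lam^-1 * tot M / #|V|%:R.
  by field; rewrite !gt_eqF.
rewrite lerDl; apply: mulr_ge0; last by rewrite invr_ge0 ltW.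
by apply: mulr_ge0 => //; rewrite invr_ge0 ltW.
Qed.

End Compl.

Section Dual.
Variables (R : realType) (V : finType).
Implicit Types (B P : V -> V -> R) (x : V -> R).
Variable adj : rel V.
Hypothesis Vn : (0 < #|V|)%N.

Local Notation n := (#|V|%:R : R).

Definition inT B := psd_sym B /\ trc B = 1.
Definition sE (f : V -> V -> R) := \sum_(u : V) \sum_(v : V) (Es adj u v)%:R * f u v.
Definition hh (lam : R) B := sE (fun u v => B u v ^+ 2) + (tot B - lam) ^+ 2.

Lemma Es_sym u v : Es adj u v = Es adj v u.
Proof. by rewrite /Es eq_sym orbC. Qed.

Lemma Es_diag u : Es adj u u = false.
Proof. by rewrite /Es eqxx. Qed.

Lemma dsum_const (c : R) : \sum_(u : V) \sum_(v : V) c = c * n ^+ 2.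
Proof.
rewrite (eq_bigr (fun _ => c * n)); last by move=> u _; rewrite sumr_const mulr_natr.
by rewrite sumr_const -mulr_natr; ring.
Qed.

Lemma dsum_pair (f : V -> R) :
  \sum_(u : V) \sum_(v : V) (f u + f v) / 2 = n * \sum_(v : V) f v.
Proof.
have E1 : \sum_(u : V) \sum_(v : V) (f u + f v) / 2 =
   ((\sum_(u : V) \sum_(v : V) f u) + \sum_(u : V) \sum_(v : V) f v) / 2.
  rewrite [RHS]mulrDl [X in _ = X + _]mulr_suml [X in _ = _ + X]mulr_suml -big_split /=; apply: eq_bigr => u _.
  by rewrite [X in _ = X + _]mulr_suml [X in _ = _ + X]mulr_suml -big_split /=; apply: eq_bigr => v _; exact: mulrDl.
rewrite E1.
have H1 : \sum_(u : V) \sum_(v : V) f u = n * \sum_(v : V) f v.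
  rewrite mulr_sumr; apply: eq_bigr => u _.
  by rewrite (sumr_const _ (f u)) mulr_natl.
have H2 : \sum_(u : V) \sum_(v : V) f v = n * \sum_(v : V) f v.
  by rewrite (sumr_const _ (\sum_(v : V) f v)) mulr_natl.
rewrite H1 H2; by field.
Qed.

Lemma le_dsum (f : V -> V -> R) u v : (forall a b, 0 <= f a b) ->
  f u v <= \sum_(a : V) \sum_(b : V) f a b.
Proof.
move=> f0; rewrite (bigD1 u) //= (bigD1 v) //= -addrA lerDl.
by apply: addr_ge0; apply: sumr_ge0 => a _ //; apply: sumr_ge0.
Qed.

Lemma inT_diag B u : inT B -> B u u <= 1.
Proof.
move=> [P T]; rewrite -T /trc (bigD1 u) //= lerDl.
by apply: sumr_ge0 => a _; exact: psd_diag.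
Qed.

Lemma inT_abs B u v : inT B -> `|B u v| <= 1.
Proof.
move=> TB; have := psd_off u v TB.1; have := inT_diag u TB; have := inT_diag v TB.
lra.
Qed.

Lemma inT_tot B : inT B -> 0 <= tot B <= n.
Proof.
move=> [P T]; apply/andP; split; first by rewrite tot_qform; exact: P.2.
by apply: le_trans (psd_tot P) _; rewrite T mulr1.
Qed.

Lemma sqr_abs (y : R) : `|y| ^+ 2 = y ^+ 2.
Proof. exact: real_normK (num_real y). Qed.

Lemma sE_term B u v : Es adj u v -> B u v ^+ 2 <= sE (fun a b => B a b ^+ 2).
Proof.
move=> e; have := @le_dsum (fun a b => (Es adj a b)%:R * B a b ^+ 2) u v.
rewrite e mul1r; apply => a b; apply: mulr_ge0; [exact: ler0n | exact: sqr_ge0].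
Qed.

Lemma sE_ge0 B : 0 <= sE (fun a b => B a b ^+ 2).
Proof.
by apply: sumr_ge0 => a _; apply: sumr_ge0 => b _; apply: mulr_ge0; [exact: ler0n | exact: sqr_ge0].
Qed.

Lemma qZ_lb B (eta : R) x : 0 < eta ->
  (forall u v, Es adj u v -> `|B u v| <= eta) ->
  - (eta * n) * \sum_(u : V) x u ^+ 2 <= qform (fun u v => - ((Es adj u v)%:R * B u v)) x.
Proof.
move=> e0 hB.
have pt : forall u v, x u * ((Es adj u v)%:R * B u v) * x v <= eta * ((x u ^+ 2 + x v ^+ 2) / 2).
  move=> u v; set c := (Es adj u v)%:R * B u v.
  have hc : `|c| <= eta.
    rewrite /c; case: (boolP (Es adj u v)) => e; first by rewrite mul1r; exact: hB.
    by rewrite mul0r normr0 ltW.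
  have h1 : x u * c * x v <= `|x u| * `|c| * `|x v|.
    by rewrite -!normrM; exact: ler_norm.
  have := sqr_abs (x u); have := sqr_abs (x v).
  have := normr_ge0 (x u); have := normr_ge0 (x v); have := normr_ge0 c.
  set a := `|x u|; set b := `|x v|; set cc := `|c| => c0 b0 a0 eb ea.
  rewrite -ea -eb; apply: (le_trans h1).
  have h2 : a * cc * b <= eta * (a * b).
    by rewrite mulrAC [eta * _]mulrC; apply: ler_wpM2l => //; apply: mulr_ge0.
  apply: (le_trans h2); apply: ler_wpM2l; first exact: ltW.
  have := sqr_ge0 (a - b); lra.
have : \sum_(u : V) \sum_(v : V) x u * ((Es adj u v)%:R * B u v) * x v <= eta * n * \sum_(u : V) x u ^+ 2.
  rewrite -mulrA -(dsum_pair (fun u => x u ^+ 2)) mulr_sumr.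
  apply: ler_sum => u _; rewrite mulr_sumr; apply: ler_sum => v _; exact: pt.
rewrite /qform.
have -> : \sum_(u : V) \sum_(v : V) x u * - ((Es adj u v)%:R * B u v) * x v =
  - \sum_(u : V) \sum_(v : V) x u * ((Es adj u v)%:R * B u v) * x v.
  rewrite -sumrN; apply: eq_bigr => u _; rewrite -sumrN; apply: eq_bigr => v _; ring.
lra.
Qed.

Lemma hh_lb lam : lovasz_theta R adj < lam ->
  exists kap, [/\ 0 < kap, kap <= 1 & forall B, inT B -> kap <= hh lam B].
Proof.
set th := lovasz_theta R adj => lt.
have th1 : 1 <= th := (@theta_ge1 R V adj Vn).
have n0 : 0 < n := nR_gt0 R Vn.
have D0 : 0 < 2 * (1 + th * n ^+ 2).
  by apply: mulr_gt0 => //; apply: ltr_pwDl => //; apply: mulr_ge0; [lra | exact: sqr_ge0].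
set eta := (lam - th) / (2 * (1 + th * n ^+ 2)).
have e0 : 0 < eta by apply: divr_gt0 => //; lra.
have eE : eta * (2 * (1 + th * n ^+ 2)) = lam - th by rewrite /eta mulrVK // unitfE gt_eqF.
exists (Num.min (eta ^+ 2) 1); split; first by rewrite lt_min ltr01 exprn_gt0.
  by rewrite ge_min lexx orbT.
move=> B TB; rewrite ge_min; apply/orP; left.
rewrite leNgt; apply/negP => hlt.
have hE : forall u v, Es adj u v -> `|B u v| <= eta.
  move=> u v e; have := sE_term B e; have := sqr_abs (B u v).
  have := normr_ge0 (B u v); move: hlt; rewrite /hh.
  have := sqr_ge0 (tot B - lam). set a := `|B u v|. nra.
have htot : lam - eta < tot B.
  move: hlt; rewrite /hh; have := sE_ge0 B. nra.
set k := (1 + eta * n ^+ 2)^-1.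
have k0 : 0 < k by rewrite invr_gt0; apply: ltr_pwDl => //; apply: mulr_ge0; [exact: ltW | exact: sqr_ge0].
have kE : k * (1 + eta * n ^+ 2) = 1 by rewrite mulVf // gt_eqF // -invr_gt0.
set B' := fun u v => (B u v + (- ((Es adj u v)%:R * B u v) + idm (eta * n) u v)) * k.
have FB' : theta_feasible adj B'.
  have [[SB PB] TrB] := TB.
  split.
  - split; first by move=> u v; rewrite /B' SB Es_sym /idm eq_sym.
    move=> x; rewrite -/(qform _ _) qform_scale !qform_add qform_idm.
    apply: mulr_ge0; first exact: ltW.
    have := qZ_lb x e0 hE; have := PB x; rewrite -/(qform _ _); lra.
  - rewrite (eq_bigr (fun v => B v v * k + eta * n * k)); last first.
      by move=> v _; rewrite /B' /= Es_diag /idm eqxx mul0r mul1r; ring.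
    rewrite big_split /= -mulr_suml sumr_const.
    move: TrB; rewrite /trc => ->.
    rewrite -[X in _ = X]kE -mulr_natr.
    change ((#|xpredT| : nat)%:R : R) with n. ring.
  - move=> u v uv a; rewrite /B' /idm (negbTE uv).
    have -> : Es adj u v by rewrite /Es uv a.
    by rewrite mul1r mul0r addr0 addrN mul0r.
have := theta_ub Vn FB'; rewrite -/th.
rewrite tot_qform qform_scale !qform_add qform_idm -tot_qform.
have hZ : - (eta * n ^+ 2) <= qform (fun u v => - ((Es adj u v)%:R * B u v)) (fun _ => 1).
  have := qZ_lb (fun _ => 1) e0 hE.
  rewrite (eq_bigr (fun _ => 1)); last by move=> u _; rewrite expr1n.
  by rewrite sumr_const -mulr_natr; congr (_ <= _); ring.
rewrite (eq_bigr (fun _ => 1)); last by move=> u _; rewrite expr1n.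
rewrite sumr_const -mulr_natr => hth.
have : k * (lam - eta) <= th.
  apply: le_trans hth; apply: ler_wpM2l; first exact: ltW.
  rewrite !mul1r; move: hZ; rewrite expr2 mulrA; lra.
move=> hk.
have : lam - eta <= th * (1 + eta * n ^+ 2).
  have -> : lam - eta = (k * (lam - eta)) * (1 + eta * n ^+ 2) by rewrite mulrAC kE mul1r.
  by apply: ler_wpM2r => //; apply: ltW; apply: ltr_pwDl => //; apply: mulr_ge0; [exact: ltW | exact: sqr_ge0].
nra.
Qed.

Lemma dsum_lin2 (f g h : V -> V -> R) (a b : R) :
  (forall u v, f u v = a * g u v + b * h u v) ->
  \sum_(u : V) \sum_(v : V) f u v =
  a * \sum_(u : V) \sum_(v : V) g u v + b * \sum_(u : V) \sum_(v : V) h u v.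
Proof.
move=> E; rewrite !mulr_sumr -big_split; apply: eq_bigr => u _.
by rewrite !mulr_sumr -big_split; apply: eq_bigr => v _; rewrite E.
Qed.

Lemma dsum_lin3 (f g h l : V -> V -> R) (a b c : R) :
  (forall u v, f u v = a * g u v + b * h u v + c * l u v) ->
  \sum_(u : V) \sum_(v : V) f u v =
  a * \sum_(u : V) \sum_(v : V) g u v + b * \sum_(u : V) \sum_(v : V) h u v
  + c * \sum_(u : V) \sum_(v : V) l u v.
Proof.
move=> E; rewrite !mulr_sumr -!big_split; apply: eq_bigr => u _.
by rewrite !mulr_sumr -!big_split; apply: eq_bigr => v _; rewrite E.
Qed.

Definition seg P B (e : R) : V -> V -> R := fun u v => P u v + e * (B u v - P u v).

Lemma inT_seg P B e : inT P -> inT B -> 0 <= e <= 1 -> inT (seg P B e).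
Proof.
move=> [[SP PP] TP] [[SB PB] TB] /andP[e0 e1]; split; first split.
- by move=> u v; rewrite /seg SP SB.
- move=> x; rewrite (@dsum_lin2 _ (fun u v => x u * P u v * x v) (fun u v => x u * B u v * x v) (1 - e) e).
    by apply: addr_ge0; apply: mulr_ge0; (exact: PP || exact: PB || lra).
  by move=> u v; rewrite /seg; ring.
- rewrite /trc /seg (eq_bigr (fun v => (1 - e) * P v v + e * B v v)); last by move=> v _; ring.
  rewrite big_split /= -!mulr_sumr; move: TP TB; rewrite /trc => -> ->; ring.
Qed.

Definition Lf lam P B := sE (fun u v => P u v * (B u v - P u v)) + (tot P - lam) * (tot B - tot P).
Definition Qf P B := sE (fun u v => (B u v - P u v) ^+ 2) + (tot B - tot P) ^+ 2.

Lemma hh_seg lam P B e :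
  hh lam (seg P B e) = hh lam P + 2 * e * Lf lam P B + e ^+ 2 * Qf P B.
Proof.
have E1 : sE (fun u v => seg P B e u v ^+ 2) =
  1 * sE (fun u v => P u v ^+ 2) + (2 * e) * sE (fun u v => P u v * (B u v - P u v))
  + e ^+ 2 * sE (fun u v => (B u v - P u v) ^+ 2).
  by rewrite /sE; apply: dsum_lin3 => u v /=; rewrite /seg; ring.
have E2 : tot (seg P B e) = 1 * tot P + e * (tot B - tot P).
  have E2a : tot (seg P B e) = 1 * tot P + e * tot (fun u v => B u v - P u v).
    by rewrite /tot; apply: dsum_lin2 => u v; rewrite /seg; ring.
  have E2b : tot (fun u v => B u v - P u v) = 1 * tot B + (-1) * tot P.
    by rewrite /tot; apply: dsum_lin2 => u v /=; ring.
  by rewrite E2a E2b; ring.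
rewrite /hh /Lf /Qf E1 E2; ring.
Qed.

Lemma dsum_lin1 (f g : V -> V -> R) (a : R) :
  (forall u v, f u v = a * g u v) ->
  \sum_(u : V) \sum_(v : V) f u v = a * \sum_(u : V) \sum_(v : V) g u v.
Proof.
move=> E; rewrite mulr_sumr; apply: eq_bigr => u _.
by rewrite mulr_sumr; apply: eq_bigr => v _; rewrite E.
Qed.

Lemma n_ge1 : 1 <= n.
Proof. by rewrite ler1n. Qed.

Lemma Qf_bound P B : inT P -> inT B -> Qf P B <= 5 * n ^+ 2.
Proof.
move=> TP TB.
have h1 : sE (fun u v => (B u v - P u v) ^+ 2) <= 4 * n ^+ 2.
  rewrite -dsum_const; apply: ler_sum => u _; apply: ler_sum => v _.
  have := inT_abs u v TP; have := inT_abs u v TB; rewrite !ler_norml.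
  move=> /andP[a1 a2] /andP[b1 b2].
  have : -2 <= B u v - P u v <= 2 by apply/andP; split; lra.
  move: (B u v - P u v) => d /andP[d1 d2].
  case: (Es adj u v); rewrite ?mul1r ?mul0r; nra.
have := inT_tot TP; have := inT_tot TB; move=> /andP[c1 c2] /andP[d1 d2].
rewrite /Qf; have : (tot B - tot P) ^+ 2 <= n ^+ 2 by nra.
lra.
Qed.

Lemma qform_rank1 x y : qform (fun u v => x u * x v) y = (\sum_(u : V) y u * x u) ^+ 2.
Proof.
rewrite /qform expr2 mulr_suml; apply: eq_bigr => u _; rewrite mulr_sumr.
by apply: eq_bigr => v _ /=; ring.
Qed.

Lemma dual_cert lam : lovasz_theta R adj < lam ->
  exists M : V -> V -> R, [/\ psd_sym M, forall u, M u u = lam - 1 &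
     forall u v, u != v -> ~~ Es adj u v -> M u v = -1].
Proof.
move=> lt.
have [kap [k0 k1 hk]] := hh_lb lt.
have th1 : 1 <= lovasz_theta R adj := @theta_ge1 R V adj Vn.
have l1 : 1 < lam by apply: le_lt_trans lt.
have n1 := n_ge1.
have n0 : 0 < n by lra.
set K := 5 * n ^+ 2.
have K1 : 1 <= K by rewrite /K; nra.
set del := kap / 2.
have d0 : 0 < del by rewrite /del; lra.
set eps := del / K.
have e0 : 0 < eps by rewrite /eps divr_gt0 //; lra.
have dle : del <= 1 / 2 by rewrite /del; lra.
have e1 : eps <= 1 by rewrite /eps ler_pdivrMr; lra.
have epsK : eps * K = del by rewrite /eps mulfVK // gt_eqF //; lra.
have Tid : inT (idm (n^-1)).
  by have [P T _] := @feas_idm R V adj Vn; split.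
set HS := [set t : R | exists B, inT B /\ t = - hh lam B].
have hh0 : forall B, 0 <= hh lam B by move=> B; apply: addr_ge0; [exact: sE_ge0 | exact: sqr_ge0].
have HSs : has_sup HS.
  split; first by exists (- hh lam (idm (n^-1))); exists (idm (n^-1)).
  exists 0 => t [B [_ ->]]; rewrite oppr_le0; exact: hh0.
have ed0 : 0 < eps * del by apply: mulr_gt0.
have [t [P [TP ->]] hP] := sup_adherent ed0 HSs.
have near : forall B, inT B -> hh lam P - eps * del <= hh lam B.
  move=> B TB; have : - hh lam B <= sup HS.
    by apply: sup_upper_bound HSs _ _; exists B.
  lra.
have Lb : forall B, inT B -> - del <= Lf lam P B.
  move=> B TB.
  have e01 : 0 <= eps <= 1 by rewrite (ltW e0) e1.
  have := near _ (inT_seg TP TB e01).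
  rewrite hh_seg; have hq := Qf_bound TP TB.
  set L := Lf lam P B; set Q := Qf P B => h.
  have : 0 <= eps * (2 * L + eps * Q + del).
    have -> : eps * (2 * L + eps * Q + del) =
      (hh lam P + 2 * eps * L + eps ^+ 2 * Q) - (hh lam P - eps * del) by ring.
    lra.
  rewrite pmulr_rge0 // => h2.
  have : eps * Q <= eps * K by apply: ler_wpM2l => //; exact: ltW.
  lra.
set r := tot P - lam.
have Phi : forall B, inT B -> del <= sE (fun u v => P u v * B u v) + r * tot B - r * lam.
  move=> B TB; have := Lb B TB; have := hk P TP; rewrite /Lf /hh -/r.
  have -> : sE (fun u v => P u v * (B u v - P u v)) =
     1 * sE (fun u v => P u v * B u v) + (-1) * sE (fun u v => P u v ^+ 2).
    by rewrite /sE; apply: dsum_lin2 => u v /=; ring.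
  rewrite /del; have -> : tot B - tot P = (tot B - lam) - r by rewrite /r; ring.
  move=> h1 h2; nra.
have rneg : r < 0.
  have := Phi _ Tid.
  have -> : sE (fun u v => P u v * idm n^-1 u v) = 0.
    rewrite /sE big1 // => u _; rewrite big1 // => v _.
    case: (eqVneq u v) => [->|uv]; first by rewrite Es_diag mul0r.
    by rewrite /idm (negbTE uv) mul0r mulr0 mulr0.
  rewrite tot_idm divff ?gt_eqF // => h; nra.
have rV0 : 0 < - r^-1 by rewrite oppr_gt0 invr_lt0.
set M := fun u v => (Es adj u v)%:R * P u v * (- r^-1) + (idm lam u v - 1).
have [[SP PP] TrP] := TP.
exists M; split.
- split; first by move=> u v; rewrite /M Es_sym SP /idm eq_sym.
  move=> x; set s := \sum_(u : V) x u ^+ 2.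
  have s0 : 0 <= s by apply: sumr_ge0 => u _; exact: sqr_ge0.
  set Q1 := qform (fun u v => (Es adj u v)%:R * P u v) x.
  set J := (\sum_(u : V) x u) ^+ 2.
  have QM : \sum_(u : V) \sum_(v : V) x u * M u v * x v = (- r^-1) * Q1 + lam * s - J.
    rewrite /Q1 /J -qform_J -(qform_idm lam x) /qform.
    have -> : (- r^-1) * (\sum_(u : V) \sum_(v : V) x u * ((Es adj u v)%:R * P u v) * x v) +
       \sum_(u : V) \sum_(v : V) x u * idm lam u v * x v - \sum_(u : V) \sum_(v : V) x u * 1 * x v
       = (- r^-1) * (\sum_(u : V) \sum_(v : V) x u * ((Es adj u v)%:R * P u v) * x v) +
       1 * (\sum_(u : V) \sum_(v : V) x u * idm lam u v * x v) + (-1) * \sum_(u : V) \sum_(v : V) x u * 1 * x v by ring.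
    by apply: dsum_lin3 => u v; rewrite /M; ring.
  rewrite QM.
  have [sz|sp] := eqVneq s 0.
    have xz : forall u, x u = 0.
      move=> u; apply/eqP; rewrite -sqrf_eq0; apply/eqP.
      by move: sz; rewrite /s => /psumr_eq0P; apply => // w _; exact: sqr_ge0.
    have -> : Q1 = 0 by rewrite /Q1 /qform big1 // => u _; rewrite big1 // => v _; rewrite xz !mul0r.
    have -> : J = 0 by rewrite /J big1 ?expr2 ?mul0r // => u _; rewrite xz.
    by rewrite sz mulr0 mulr0 addr0 subr0.
  have s1 : 0 < s by rewrite lt_def sp s0.
  set Bx := fun u v => x u * x v * s^-1.
  have TBx : inT Bx.
    split; first split.
    + by move=> u v; rewrite /Bx /= [x u * _]mulrC.
    + move=> y; rewrite -/(qform _ _).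
      have -> : qform Bx y = s^-1 * qform (fun u v => x u * x v) y.
        by rewrite /qform; apply: dsum_lin1 => u v; rewrite /Bx; ring.
      rewrite qform_rank1.
      by apply: mulr_ge0; [rewrite invr_ge0 | exact: sqr_ge0].
    + rewrite /trc /Bx -mulr_suml.
      have -> : \sum_(i : V) x i * x i = s by apply: eq_bigr => u _; rewrite expr2.
      by rewrite divff // gt_eqF.
  have := Phi _ TBx.
  have -> : sE (fun u v => P u v * Bx u v) = s^-1 * Q1.
    by rewrite /sE /Q1 /qform; apply: dsum_lin1 => u v; rewrite /Bx; ring.
  have -> : tot Bx = s^-1 * J.
    rewrite /tot /J -qform_J /qform; apply: dsum_lin1 => u v; rewrite /Bx; ring.
  move=> h.
  have h2 : 0 < Q1 + r * J - r * lam * s.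
    have -> : Q1 + r * J - r * lam * s = s * (s^-1 * Q1 + r * (s^-1 * J) - r * lam).
      by field; rewrite gt_eqF.
    by apply: mulr_gt0 => //; lra.
  have -> : - r^-1 * Q1 + lam * s - J = (- r^-1) * (Q1 + r * J - r * lam * s).
    by field; rewrite lt_eqF.
  by apply: mulr_ge0; apply: ltW.
- by move=> u; rewrite /M Es_diag /idm eqxx mul0r mul0r add0r mul1r.
- move=> u v uv e; rewrite /M (negbTE e) /idm (negbTE uv) !mul0r add0r.
  by rewrite sub0r.
Qed.
End Dual.

Section Prod.
Variables (R : realType) (V : finType) (adj1 adj2 : rel V).
Hypothesis Vn : (0 < #|V|)%N.
Hypothesis disj : forall u v, u != v -> adj2 u v -> ~~ Es adj1 u v.

Lemma theta_prod : #|V|%:R <= lovasz_theta R adj1 * lovasz_theta R adj2.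
Proof.
set t1 := lovasz_theta R adj1; set t2 := lovasz_theta R adj2; set n := (#|V|%:R : R).
have t11 : 1 <= t1 := @theta_ge1 R V adj1 Vn.
have t21 : 1 <= t2 := @theta_ge1 R V adj2 Vn.
rewrite leNgt; apply/negP => hlt.
set a := n / t2.
have t20 : t2 != 0 by rewrite gt_eqF //; lra.
have aE : a * t2 = n by rewrite /a mulfVK.
have t1a : t1 < a.
  rewrite /a ltr_pdivlMr; last by lra.
  done.
set lam := (t1 + a) / 2.
have l1 : t1 < lam by rewrite /lam; lra.
have l2 : lam < a by rewrite /lam; lra.
have [M [PM Md Mo]] := dual_cert Vn l1.
have := compl_lb Vn disj (lam := lam) (M := M) _ PM Md Mo.
have l0 : 0 < lam by lra.
move=> /(_ l0); rewrite ler_pdivrMr // -/t2 => h.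
have : t2 * lam < t2 * a by rewrite ltr_pM2l //; lra.
rewrite [t2 * a]mulrC aE; lra.
Qed.

End Prod.

Unset Implicit Arguments.
Local Close Scope classical_set_scope.

Theorem corollary1 (R : realType) (F : finFieldType) (S : {set F})
    (hS0 : 0 \notin S) (hSsym : forall x : F, x \in S -> - x \in S) :
  let G := cayley S in
  let Gbar := cayley (compl_conn S) in
  let A := rho_lin R S = lovasz_theta R G /\
           rho_lin R (compl_conn S) = lovasz_theta R Gbar in
  let B := rho_lin R S < lovasz_theta R G \/
           rho_lin R (compl_conn S) < lovasz_theta R Gbar in
  (A /\ ~ B) \/ (~ A /\ B).
Proof.
move=> G Gbar A B.
have Vn : (0 < #|F|)%N by apply/card_gt0P; exists 0.
have disj : forall u v : F, u != v -> Gbar u v -> ~~ Es G u v.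
  move=> u v uv; rewrite /Gbar /cayley /compl_conn inE => /andP[_ nS].
  rewrite /Es /G /cayley uv /=; apply/negP => /orP[h|h].
    by rewrite h in nS.
  by move: nS; have := hSsym _ h; rewrite opprB => ->.
have hprod := theta_prod R Vn disj.
set t1 := lovasz_theta R G in hprod *; set t2 := lovasz_theta R Gbar in hprod *.
have t1p : 0 < t1 by have := @theta_ge1 R F G Vn; rewrite -/t1; lra.
have t2p : 0 < t2 by have := @theta_ge1 R F Gbar Vn; rewrite -/t2; lra.
have cardE : (#|S| + #|compl_conn S|)%N = #|F|.-1.
  rewrite -(cardsC1 (0 : F)) -(cardsID S [set~ (0 : F)]).
  have -> : [set~ (0 : F)] :&: S = S.
    apply/setP => x; rewrite !inE.
    case: (boolP (x \in S)) => xS; rewrite ?andbF ?andbT //.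
    by apply/eqP => x0; move: hS0; rewrite -x0 xS.
  have -> : [set~ (0 : F)] :\: S = compl_conn S.
    by apply/setP => x; rewrite !inE andbC.
  by [].
have q2 : (1 < #|F|)%N.
  have : #|[set (0 : F); 1]| = 2%N by rewrite cards2 eq_sym oner_neq0.
  by move=> h; have := subset_leq_card (finset.subsetT [set (0 : F); 1]); rewrite cardsT h.
have qpos : 0 < (#|F|%:R : R) by rewrite ltr0n.
set q := (#|F|%:R : R) in qpos *.
set r1 := rho_lin R S; set r2 := rho_lin R (compl_conn S).
have r1p : 0 < r1 by apply: powR_gt0.
have r2p : 0 < r2 by apply: powR_gt0.
have rr : r1 * r2 = q.
  rewrite /r1 /r2 /rho_lin -powRD; last by apply/implyP => _; rewrite gt_eqF.
  have m0 : 0 < ((#|F| - 1)%N%:R : R) by rewrite ltr0n subn_gt0.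
  set m := ((#|F| - 1)%N%:R : R) in m0 *.
  have abm : (#|S|%:R + #|compl_conn S|%:R : R) = m.
    by rewrite -natrD cardE /m subn1.
  have -> : 1 - #|S|%:R / m + (1 - #|compl_conn S|%:R / m) = 1.
    rewrite -abm; field; rewrite abm gt_eqF //.
  by rewrite powRr1 // ltW.
rewrite /A /B -/r1 -/r2 -/t1 -/t2.
have [h1|h1|h1] := ltgtP r1 t1; have [h2|h2|h2] := ltgtP r2 t2.
- by right; split; [case; lra | left].
- by right; split; [case; lra | left].
- by right; split; [case; lra | left].
- by right; split; [case; lra | right].
- exfalso; nra.
- exfalso; nra.
- by right; split; [case; lra | right].
- exfalso; nra.
- by left; split; [split | case; lra].
Qed.
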